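(* Let $\lambda<\mathfrak u$ be a cardinal and let $X$ be a set of reals with $X=\bigcup_{\alpha<\lambda}X_\alpha$, where each subspace $X_\alpha$ satisfies $\mathrm{Split}(\mathrm T,\mathrm T)$. Then $X$ satisfies $\mathrm{Split}(\mathrm T,\mathrm T)$. The same holds with $\mathrm{Split}(B_{\mathrm T},B_{\mathrm T})$ in place of $\mathrm{Split}(\mathrm T,\mathrm T)$, and with $\mathrm{Split}(C_{\mathrm T},C_{\mathrm T})$ in place of $\mathrm{Split}(\mathrm T,\mathrm T)$. In particular these three properties are closed under countable unions.
   Context: A set of reals is an infinite topological space homeomorphic to a subset of $\mathbb R$. A cover of a space $X$ is a family $\mathcal U$ of subsets of $X$ with $\bigcup\mathcal U=X$ such that $X\not\subseteq U$ for all $U\in\mathcal U$. It is a $\tau$-cover if every $x\in X$ lies in infinitely many members and for all $x,y\in X$ at least one of $\{U\in\mathcal U: x\in U, y\notin U\}$, $\{U\in\mathcal U: y\in U, x\notin U\}$ is finite. $\mathrm T$ denotes the collection of open $\tau$-covers, $B_{\mathrm T}$ of countable Borel $\tau$-covers, $C_{\mathrm T}$ of countable clopen $\tau$-covers of $X$. $X$ satisfies $\mathrm{Split}(\mathfrak U,\mathfrak V)$ if every $\mathcal U\in\mathfrak U$ can be partitioned into two disjoint subfamilies each containing a subfamily belonging to $\mathfrak V$. $\mathfrak u$ is the minimal cardinality of a family $B$ of infinite subsets of $\mathbb N$ that is a base for a nonprincipal ultrafilter $U$ on $\mathbb N$, i.e. $U=\{a\subseteq\mathbb N:\exists b\in B\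 (b\setminus a\text{ finite})\}$. *)

(* Defs.v *)
From HB Require Import structures.
From mathcomp Require Import all_boot all_order all_algebra.
From mathcomp Require Import all_classical all_reals topology normedtype measure.
Set Implicit Arguments. Unset Strict Implicit. Unset Printing Implicit Defensive.
Import Order.TTheory GRing.Theory Num.Theory.
Import numFieldNormedType.Exports.
Local Open Scope classical_set_scope.

(* A "set of reals" is modelled as a subset X of the real line with the
   subspace topology (all notions below are topological invariants). *)
Section Defs.
Variable R : realType.

Definition open_in (A U : set R) := exists V : set R, open V /\ U = A `&` V.
Definition closed_in (A U : set R) := exists V : set R, closed V /\ U = A `&` V.
Definition clopen_in (A U : set R) := open_in A U /\ closed_in A U.
Definition borel_set (V : set R) := <<s [set W : set R | open W] >> V.
Definition borel_in (A U : set R) := exists V : set R, borel_set V /\ U = A `&` V.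

Definition is_cover (A : set R) (F : set (set R)) :=
  [/\ (forall U, F U -> U `<=` A),
      \bigcup_(U in F) U = A &
      (forall U, F U -> ~ (A `<=` U))].

Definition tau_cover (A : set R) (F : set (set R)) :=
  [/\ is_cover A F,
      (forall x, A x -> infinite_set [set U | F U /\ U x]) &
      (forall x y, A x -> A y ->
         finite_set [set U | F U /\ U x /\ ~ U y] \/
         finite_set [set U | F U /\ U y /\ ~ U x])].

Definition Tcovers (A : set R) : set (set (set R)) :=
  [set F | tau_cover A F /\ (forall U, F U -> open_in A U)].
Definition BTcovers (A : set R) : set (set (set R)) :=
  [set F | [/\ tau_cover A F, countable F & (forall U, F U -> borel_in A U)]].
Definition CTcovers (A : set R) : set (set (set R)) :=
  [set F | [/\ tau_cover A F, countable F & (forall U, F U -> clopen_in A U)]].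

Definition SplitProp (UU VV : set (set (set R))) :=
  forall F, UU F -> exists F1 F2 : set (set R),
    [/\ F1 `|` F2 = F, F1 `&` F2 = set0,
        (exists2 G1, G1 `<=` F1 & VV G1) &
        (exists2 G2, G2 `<=` F2 & VV G2)].

End Defs.

Inductive tau_kind := kind_T | kind_BT | kind_CT.

Definition covers_of (k : tau_kind) (R : realType) : set R -> set (set (set R)) :=
  match k with
  | kind_T => @Tcovers R
  | kind_BT => @BTcovers R
  | kind_CT => @CTcovers R
  end.

Definition nonprincipal_ultrafilter (U : set (set nat)) :=
  [/\ (forall a b, U a -> U b -> U (a `&` b)),
      (forall a b, U a -> a `<=` b -> U b),
      ~ U set0,
      (forall a, U a \/ U (~` a)) &
      (forall a, finite_set a -> ~ U a)].

Definition u_base (B : set (set nat)) :=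
  (forall b, B b -> infinite_set b) /\
  exists U, nonprincipal_ultrafilter U /\
            U = [set a | exists2 b, B b & finite_set (b `\` a)].

Definition lt_u (I : Type) :=
  forall B : set (set nat), u_base B ->
    ([set: I] #<= B)%card /\ ~ (B #<= [set: I])%card.

(* Main.v *)
Require Import Defs.
From HB Require Import structures.
From mathcomp Require Import all_boot all_order all_algebra.
From mathcomp Require Import all_classical all_reals topology normedtype measure.
Set Implicit Arguments.
Unset Strict Implicit.
Local Open Scope classical_set_scope.

Lemma nat_unbounded (S : set nat) : infinite_set S ->
  forall N, exists n, S n /\ (N < n)%N.
Proof.
move=> hS N; apply: contrapT => hn; apply: hS.
apply: (sub_finite_set _ (finite_II N.+1)) => n Sn /=.
by rewrite ltnS leqNgt; apply/negP => h; apply: hn; exists n.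
Qed.

Lemma unbounded_infinite (S : set nat) :
  (forall N, exists n, S n /\ (N < n)%N) -> infinite_set S.
Proof.
move=> hS /finite_seqP [s hs].
have [n [Sn]] := hS (\max_(x <- s) x).
rewrite hs /= in Sn.
by rewrite ltnNge (leq_bigmax_seq _ Sn).
Qed.

Lemma finU {T} {A B : set T} : finite_set A -> finite_set B -> finite_set (A `|` B).
Proof. by move=> ? ?; rewrite finite_setU. Qed.

Section UF.
Variables (T : Type) (P : set T) (m : T -> set nat).
Hypothesis hinf : forall x, P x -> infinite_set (m x).
Hypothesis hchain : forall x y, P x -> P y ->
  finite_set (m x `\` m y) \/ finite_set (m y `\` m x).
Hypothesis hns : forall a : set nat, exists x, P x /\
  (finite_set (m x `&` a) \/ finite_set (m x `\` a)).

Definition UU (a : set nat) := exists x, P x /\ finite_set (m x `\` a).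

Lemma UU_up a b : UU a -> a `<=` b -> UU b.
Proof.
move=> [x [Px fx]] ab; exists x; split => //.
by apply: sub_finite_set fx => n [mn nb]; split => // /ab.
Qed.

Lemma UU_I a b : UU a -> UU b -> UU (a `&` b).
Proof.
move=> [x [Px fx]] [y [Py fy]].
case: (hchain Px Py) => h.
- exists x; split => //.
  apply: (sub_finite_set _ (finU fx (finU h fy))).
  move=> n [mn nab]; have [na|na] := pselect (a n); last by left.
  right; have [my|my] := pselect (m y n); last by left.
  by right; split => // nb; apply: nab.
- exists y; split => //.
  apply: (sub_finite_set _ (finU fy (finU h fx))).
  move=> n [mn nab]; have [nb|nb] := pselect (b n); last by left.
  right; have [mx|mx] := pselect (m x n); last by left.
  by right; split => // na; apply: nab.
Qed.

Lemma UU_fin a : UU a -> ~ finite_set a.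
Proof.
move=> [x [Px fx]] fa; apply: (hinf Px).
apply: (sub_finite_set _ (finU fx fa)).
by move=> n mn; have [an|an] := pselect (a n); [right|left].
Qed.

Lemma UU_0 : ~ UU set0.
Proof. by move/UU_fin; apply; apply: finite_set0. Qed.

Lemma UU_ne a : UU a -> exists n, a n.
Proof.
move=> h; apply: contrapT => hn; apply: UU_0.
apply: (UU_up h) => n an.
by apply: hn; exists n.
Qed.

Lemma UU_m x : P x -> UU (m x).
Proof.
move=> Px; exists x; split => //.
by apply: sub_finite_set (finite_set0 nat) => n [].
Qed.

Lemma UU_ultra a : UU a \/ UU (~` a).
Proof.
have [x [Px [h|h]]] := hns a.
- right; exists x; split => //.
  by apply: sub_finite_set h => n [mn /= /contrapT].
- by left; exists x.
Qed.

Lemma UU_bigcup (s : nat -> set nat) k :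
  UU (\bigcup_(j in `I_k) s j) -> exists j, (j < k)%N /\ UU (s j).
Proof.
elim: k => [|k IH] h.
  by exfalso; apply: UU_0; apply: (UU_up h) => n [j /=].
have [hk|hk] := UU_ultra (s k); first by exists k.
have [j [jk hj]] : exists j, (j < k)%N /\ UU (s j).
  apply: IH; apply: (UU_up (UU_I h hk)) => n [[j /= jk sj] nk].
  exists j => //=; rewrite ltn_neqAle -ltnS jk andbT.
  by apply/eqP => ej; apply: nk; rewrite -ej.
by exists j; split => //; rewrite ltnW.
Qed.

End UF.

Set Implicit Arguments.
Unset Strict Implicit.
Local Open Scope classical_set_scope.

Section C.
Variable R : realType.

Definition kprop (k : tau_kind) (A U : set R) :=
  match k with kind_T => open_in A U | kind_BT => borel_in A U | kind_CT => clopen_in A U end.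

Lemma covers_ofE k (A : set R) F : covers_of k A F <->
  [/\ tau_cover A F, (k <> kind_T -> countable F) & (forall U, F U -> kprop k A U)].
Proof.
case: k => /=; split.
- by move=> [h1 h2]; split.
- by move=> [h1 _ h2]; split.
- by move=> [h1 h2 h3]; split.
- by move=> [h1 h2 h3]; split => //; apply: h2.
- by move=> [h1 h2 h3]; split.
- by move=> [h1 h2 h3]; split => //; apply: h2.
Qed.

Lemma inter_sub (X Y V : set R) : Y `<=` X -> (X `&` V) `&` Y = Y `&` V.
Proof.
move=> YX; apply/seteqP; split => x; first by move=> [[_ ?] ?].
by move=> [Yx Vx]; split => //; split => //; apply: YX.
Qed.

Lemma kprop_restr k (X Y U : set R) : Y `<=` X -> kprop k X U -> kprop k Y (U `&` Y).
Proof.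
move=> YX; case: k => /=.
- by move=> [V [oV ->]]; exists V; split => //; rewrite inter_sub.
- by move=> [V [oV ->]]; exists V; split => //; rewrite inter_sub.
- move=> [[V [oV eV]] [W [cW eW]]]; split.
    by exists V; split => //; rewrite eV inter_sub.
  by exists W; split => //; rewrite eW inter_sub.
Qed.

Lemma sub_covers k (X : set R) F G : covers_of k X F -> G `<=` F ->
  (forall x, X x -> infinite_set [set U | G U /\ U x]) -> covers_of k X G.
Proof.
move=> /covers_ofE [[[FX Fu FnX] Finf Fch] Fc Fk] GF Ginf.
apply/covers_ofE; split.
- split.
  + split.
    * by move=> U /GF /FX.
    * apply/seteqP; split; first by move=> x [U /GF /FX h]; apply: h.
      move=> x Xx; have /infinite_setN0 [U [GU Ux]] := Ginf x Xx.
      by exists U.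
    * by move=> U /GF /FnX.
  + exact: Ginf.
  + move=> x y Xx Xy; case: (Fch x y Xx Xy) => h; [left|right];
      by apply: sub_finite_set h => U [/GF].
- by move=> hk; apply: sub_countable (Fc hk); apply: subset_card_le.
- by move=> U /GF; apply: Fk.
Qed.

End C.

Set Implicit Arguments.
Unset Strict Implicit.
Local Open Scope classical_set_scope.

Lemma no_countable_base (B : set (set nat)) : u_base B -> countable B -> False.
Proof.
move=> [Binf [U [[UI Uup U0 Uult Ufin] UE]]] cB.
have UB b : B b -> U b.
  by move=> Bb; rewrite UE; exists b => //; rewrite setDv; apply: finite_set0.
have [b0 Bb0] : exists b, B b.
  have : U setT.
    case: (Uult setT) => // h; exfalso; apply: U0; by rewrite setCT in h.
  by rewrite UE => -[b Bb _]; exists b.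
have /pcard_surjP [g gs] := cB.
pose f n := if pselect (B (g n)) is left _ then g n else b0.
have fB n : B (f n) by rewrite /f; case: pselect.
have fs b : B b -> exists n, f n = b.
  move=> Bb; have [n _ gn] := gs b Bb; exists n.
  by rewrite /f; case: pselect => //; rewrite gn.
pose c := fix c n := if n is n'.+1 then c n' `&` f n else f 0.
have cU n : U (c n) by elim: n => [|n IH] /=; [apply: UB|apply: UI => //; apply: UB].
have cinf n : infinite_set (c n) by move=> /Ufin; apply; apply: cU.
have cf j n : (j <= n)%N -> c n `<=` f j.
  elim: n => [|n IH]; first by rewrite leqn0 => /eqP -> .
  rewrite leq_eqVlt => /orP [/eqP -> | ]; first by move=> x [].
  by rewrite ltnS => /IH h x [/h].
pose pick (S : set nat) N := xget 0%N [set n | S n /\ (N < n)%N].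
have pickP S N : infinite_set S -> S (pick S N) /\ (N < pick S N)%N.
  by move=> hS; exact: (@xgetPex _ 0%N [set n | S n /\ (N < n)%N] (nat_unbounded hS N)).
pose w := fix w k := if k is k'.+1 then pick (c k./2) (w k') else pick (c 0) 0%N.
have wc k : c k./2 (w k).
  case: k => [|k]; first exact: (pickP (c 0) 0%N (cinf 0%N)).1.
  exact: (pickP (c k.+1./2) (w k) (cinf _)).1.
have wS k : (w k < w k.+1)%N by exact: (pickP (c k.+1./2) (w k) (cinf _)).2.
have wlt i j : (i < j)%N -> (w i < w j)%N.
  move=> /subnK <-; elim: (j - i.+1) => [|d IH]; first by rewrite add0n.
  by rewrite addSn; apply: ltn_trans IH (wS _).
have wge k : (k <= w k)%N.
  by elim: k => [|k IH] //; apply: leq_ltn_trans IH (wS k).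
have winj i j : w i = w j -> i = j.
  move=> e; case: (ltngtP i j) => // h; have := wlt _ _ h; by rewrite e ltnn.
pose A := [set n | exists k, n = w k.*2].
have wodd n : ~ A (w (n.*2).+1).
  move=> [k /winj e]; have := congr1 odd e; by rewrite /= !odd_double.
have half1 n : (n.*2).+1./2 = n by rewrite /= uphalf_double.
have half2 n : (n.*2)./2 = n by rewrite doubleK.
case: (Uult A) => h; rewrite UE in h; move: h => [b Bb fb]; have [j fj] := fs b Bb.
- move: fb; apply: unbounded_infinite => N; exists (w ((maxn N j).*2).+1); split.
    split; last by apply: wodd.
    rewrite -fj; have := wc ((maxn N j).*2.+1); rewrite half1; apply: cf; exact: leq_maxr.
  apply: leq_trans (wge _); rewrite ltnS; apply: leq_trans (leq_maxl N j) _.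
  by rewrite -addnn leq_addr.
- move: fb; apply: unbounded_infinite => N; exists (w ((maxn N j).+1.*2)); split.
    split; last by move=> /(_ (ex_intro _ (maxn N j).+1 erefl)).
    rewrite -fj; have := wc ((maxn N j).+1.*2); rewrite half2; apply: cf.
    by apply: leq_trans (leq_maxr N j) _.
  apply: leq_trans (wge _); apply: leq_ltn_trans (leq_maxl N j) _.
  by rewrite -addnn addSn ltnS leq_addr.
Qed.

Set Implicit Arguments.
Unset Strict Implicit.
Import Order.TTheory GRing.Theory Num.Theory.
Import numFieldNormedType.Exports.
Local Open Scope classical_set_scope.
Local Open Scope ring_scope.

Section E.
Variable R : realType.

Definition Jq (q : rat * rat) : set R := [set r | ratr q.1 < r < ratr q.2].

Lemma open_rat (V : set R) x : open V -> V x -> exists q, Jq q x /\ Jq q `<=` V.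
Proof.
move=> oV Vx.
have : nbhs x V by rewrite openE in oV; apply: oV.
move=> /nbhs_ballP [e e0 be].
have e0' : 0 < e by [].
have [q1] : exists q, ratr q \in `]x - e, x[ by apply: rat_in_itvoo; rewrite ltrBlDr ltrDl.
have [q2] : exists q, ratr q \in `]x, x + e[ by apply: rat_in_itvoo; rewrite ltrDl.
rewrite !in_itv /= => /andP [h3 h4] /andP [h1 h2].
exists (q1, q2); split; first by rewrite /Jq /= h2 h3.
move=> r /andP [/= r1 r2]; apply: be; rewrite ball_itv /= in_itv /=.
apply/andP; split; [exact: lt_trans h1 r1|exact: lt_trans r2 h4].
Qed.
Local Close Scope ring_scope.

Lemma inf_sub_countable (S : set (set R)) : exists T, T `<=` S /\ countable T /\ (finite_set S -> T = S) /\ (infinite_set S -> infinite_set T).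
Proof.
have [fS|iS] := pselect (finite_set S).
  exists S; split => //; split; first exact: finite_set_countable.
  by split.
have /infiniteP/pcard_leP [f] := iS.
exists (f @` setT); split; first by move=> U [n _ <-]; apply: funS.
split; first by apply: card_le_trans (card_image_le _ _) _; apply: card_lexx.
split => // _; apply/infiniteP.
have fi : {in [set: nat] &, injective f}.
  move=> a b _ _ h; by apply: (inj _ _ h); rewrite inE.
by rewrite (card_le_eqr (inj_card_eq fi)); apply: card_lexx.
Qed.

Lemma countable_subcover (X : set R) (F : set (set R)) :
  (forall U, F U -> open_in X U) ->
  (forall x, X x -> infinite_set [set U | F U /\ U x]) ->
  exists F', [/\ F' `<=` F, countable F' &
    forall x, X x -> infinite_set [set U | F' U /\ U x]].
Proof.
move=> Fo Finf.
pose S q := [set U | F U /\ X `&` Jq q `<=` U].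
have /choice [T hT] := fun q => inf_sub_countable (S q).
exists (\bigcup_(q in [set: rat * rat]) T q); split.
- by move=> U [q _ /(proj1 (hT q)) []].
- apply: bigcup_countable => // q _; exact: (proj1 (proj2 (hT q))).
- move=> x Xx.
  have [[q [Jx iS]]|] := pselect (exists q, Jq q x /\ infinite_set (S q)).
    have := proj2 (proj2 (proj2 (hT q))) iS.
    apply: contra_not; apply: sub_finite_set => U TU; split; first by exists q.
    by have [_ h] := proj1 (hT q) U TU; apply: h.
  move=> hn; have := Finf x Xx; apply: contra_not; apply: sub_finite_set.
  move=> U [FU Ux]; split => //.
  have [V [oV eU]] := Fo U FU.
  have [q [Jx JV]] : exists q, Jq q x /\ Jq q `<=` V.
    by apply: open_rat oV _; rewrite eU in Ux; case: Ux.
  have fS : finite_set (S q) by apply: contrapT => iS; apply: hn; exists q.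
  exists q => //; rewrite (proj1 (proj2 (proj2 (hT q))) fS); split => //.
  by rewrite eU => y [Xy Jy]; split => //; apply: JV.
Qed.


Lemma enum_cover k (X : set R) F : covers_of k X F -> (exists x, X x) ->
  exists e : nat -> set R, [/\ injective e, (forall n, F (e n)) &
    (forall x, X x -> infinite_set [set n | e n x])].
Proof.
move=> hF [x0 Xx0].
have [F' [F'F cF' iF']] : exists F', [/\ F' `<=` F, countable F' &
    forall x, X x -> infinite_set [set U | F' U /\ U x]].
  move/covers_ofE: hF => [[_ Finf _] Fc Fk].
  case hk: k in Fc Fk.
  - by apply: countable_subcover => // U /Fk.
  - by exists F; split => //; apply: Fc.
  - by exists F; split => //; apply: Fc.
have infF' : infinite_set F'.
  by move=> fF'; apply: (iF' x0 Xx0); apply: sub_finite_set fF' => U [].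
have /card_esym /card_set_bijP [e [ef ei es]] := eq_card_nat cF' infF'.
exists e; split.
- by move=> a b h; apply: ei => //; rewrite inE.
- by move=> n; apply: F'F; apply: ef.
- move=> x Xx fin; apply: (iF' x Xx).
  apply: sub_finite_set (finite_image e fin) => U [F'U Ux].
  by have [n _ enU] := es U F'U; exists n => //=; rewrite enU.
Qed.

End E.

Set Implicit Arguments.
Unset Strict Implicit.
Local Open Scope classical_set_scope.

Section S3.
Variables (R : realType) (k : tau_kind) (X : set R) (F : set (set R)) (e : nat -> set R).
Hypothesis hF : covers_of k X F.
Hypothesis einj : injective e.
Hypothesis eF : forall n, F (e n).
Let m (x : R) := [set n | e n x].
Hypothesis hinf : forall x, X x -> infinite_set (m x).
Hypothesis hns : forall a : set nat, exists x, X x /\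
  (finite_set (m x `&` a) \/ finite_set (m x `\` a)).

Lemma hchain : forall x y, X x -> X y ->
  finite_set (m x `\` m y) \/ finite_set (m y `\` m x).
Proof.
move=> x y Xx Xy; move/covers_ofE: hF => [[_ _ Fch] _ _].
have inj' (A : set (set R)) : {in e @^-1` A &, injective e} by move=> a b _ _ /einj.
case: (Fch x y Xx Xy) => h; [left|right];
  apply: sub_finite_set (finite_preimage (inj' _) h) => n [h1 h2] /=; split => //.
Qed.


Lemma step3 (Y : set R) x0 : X x0 -> Y `<=` X ->
  SplitProp (covers_of k Y) (covers_of k Y) ->
  exists z, X z /\ forall y, Y y -> finite_set (m z `\` m y).
Proof.
move=> Xx0 YX hsplit.
have [Yne|Ye] := pselect (exists y, Y y); last first.
  by exists x0; split => // y Yy; exfalso; apply: Ye; exists y.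
pose q := [set n | Y `<=` e n].
have qm y : Y y -> q `<=` m y by move=> Yy n qn; apply: qn.
have [fq|iq] := pselect (finite_set q); last first.
  have [x [Xx [h|h]]] := hns q; exists x; split => // y Yy.
  - case: (hchain Xx (YX _ Yy)) => // h2; exfalso; apply: iq.
    apply: sub_finite_set (finU h h2) => n qn.
    by have [mx|mx] := pselect (m x n); [left|right; split => //; apply: qm].
  - by apply: sub_finite_set h => n [mxn nmy]; split => // /(qm _ Yy).
pose pi n := e n `&` Y.
pose D := pi @` (~` q).
have Dnot V : D V -> ~ (Y `<=` V).
  by move=> [n nq <-] hY; apply: nq => y /hY [].
have Dsub V : D V -> V `<=` Y by move=> [n _ <-] y [].
have Dinf y : Y y -> infinite_set [set V | D V /\ V y].
  move=> Yy /finite_setP [K] /card_esym /card_set_bijP [g [gf gi gs]].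
  pose s j := [set n | ~ q n /\ pi n = g j].
  have U1 : UU X m (m y `\` q).
    exists y; split; first exact: YX.
    apply: sub_finite_set fq => n [myn h]; apply: contrapT => nq; by apply: h.
  have [j [jK hj]] : exists j, (j < K)%N /\ UU X m (s j).
    apply: (UU_bigcup hinf hchain hns); apply: (UU_up U1) => n [myn nq].
    have [j jK gj] := gs (pi n) (conj (ex_intro2 _ _ n nq erefl) (conj myn Yy)).
    by exists j => //; split.
  have [[n' nq' gn'] _] : D (g j) /\ g j y by apply: gf.
  apply: (Dnot _ (gf j jK).1) => w Yw.
  have [n [/= ewn [nq pn]]] := UU_ne hinf (UU_I hchain (UU_m m (YX _ Yw)) hj).
  by rewrite -pn; split.
have hD : covers_of k Y D.
  move/covers_ofE: hF => [_ Fc Fk].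
  apply/covers_ofE; split.
  - split.
    + split => //.
      apply/seteqP; split; first by move=> y [V /Dsub h /h].
      by move=> y Yy; have /infinite_setN0 [V [DV Vy]] := Dinf y Yy; exists V.
    + exact: Dinf.
    + move=> y w Yy Yw.
      case: (hchain (YX _ Yy) (YX _ Yw)) => h; [left|right];
        apply: sub_finite_set (finite_image pi h) => V [[n nq <-] [[eny _] nw]];
        exists n => //; split => // ewn; apply: nw; split => //.
  - by move=> hk; apply: card_le_trans (card_image_le _ _) _; apply: countableP.
  - by move=> V [n _ <-]; apply: kprop_restr YX (Fk _ (eF n)).
have [D1 [D2 [eD dD [G1 G1D1 hG1] [G2 G2D2 hG2]]]] := hsplit D hD.
pose a := [set n | ~ q n /\ D1 (pi n)].
have [x [Xx h]] := hns a; exists x; split => // y Yy.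
case: (hchain Xx (YX _ Yy)) => // hyx; exfalso.
have DD1 V : D1 V -> D V by rewrite -eD => ?; left.
have DD2 V : D2 V -> D V by rewrite -eD => ?; right.
case: h => h.
- move/covers_ofE: hG1 => [[_ G1inf _] _ _]; apply: (G1inf y Yy).
  apply: sub_finite_set (finite_image pi (finU h hyx)) => V [G1V Vy].
  have D1V := G1D1 _ G1V; have [n nq pn] := DD1 _ D1V.
  exists n => //; rewrite -pn in Vy D1V; case: Vy => eny _.
  by have [mx|mx] := pselect (m x n); [left; split => //; split|right].
- move/covers_ofE: hG2 => [[_ G2inf _] _ _]; apply: (G2inf y Yy).
  apply: sub_finite_set (finite_image pi (finU h hyx)) => V [G2V Vy].
  have D2V := G2D2 _ G2V; have [n nq pn] := DD2 _ D2V.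
  exists n => //; rewrite -pn in Vy D2V; case: Vy => eny _.
  have na : ~ a n.
    move=> [_ D1n]; have : (D1 `&` D2) (pi n) by split.
    by rewrite dD.
  by have [mx|mx] := pselect (m x n); [left; split|right].
Qed.

End S3.

Unset Implicit Arguments.
Set Strict Implicit.
Local Open Scope classical_set_scope.

Lemma inj_inf {T U : Type} {e : T -> U} {S : set T} : injective e ->
  infinite_set S -> infinite_set (e @` S).
Proof.
move=> ei iS fS; apply: iS.
have h : {in e @^-1` (e @` S) &, injective e} by move=> a b _ _ /ei.
by apply: sub_finite_set (finite_preimage h fS) => t St; exists t.
Qed.

Theorem theorem6p4 (k : tau_kind) (R : realType) (I : Type)
    (X : set R) (Xs : I -> set R) :
  infinite_set X ->
  X = \bigcup_(i in [set: I]) Xs i ->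
  (forall i, SplitProp (covers_of k (Xs i)) (covers_of k (Xs i))) ->
  (lt_u I \/ countable [set: I]) ->
  SplitProp (covers_of k X) (covers_of k X).
Proof.
move=> Xinf XE hXs hI F hF.
have [x0 Xx0] := infinite_setN0 Xinf.
have [e [einj eF einf]] := enum_cover hF (ex_intro _ x0 Xx0).
pose m x := [set n | e n x].
have [[a ha]|nos] := pselect (exists a, forall x, X x ->
    infinite_set (m x `&` a) /\ infinite_set (m x `\` a)).
  exists (e @` a), (F `\` e @` a); split.
  - apply/seteqP; split => U.
      by case => [[n _ <-]|[]] //; apply: eF.
    by move=> FU; have [h|h] := pselect ((e @` a) U); [left|right].
  - by apply/seteqP; split => U // [h1 [_ h3]].
  - exists (e @` a) => //; apply: (sub_covers hF).
      by move=> U [n _ <-]; apply: eF.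
    move=> x Xx; move: (inj_inf einj (ha x Xx).1); apply: sub_infinite_set.
    by move=> U [n [exn an] <-]; split => //; exists n.
  - exists (e @` (~` a)).
      move=> U [n na <-]; split; first exact: eF.
      by move=> [n' an' /einj en]; apply: na; rewrite -en.
    apply: (sub_covers hF); first by move=> U [n _ <-]; apply: eF.
    move=> x Xx; move: (inj_inf einj (ha x Xx).2); apply: sub_infinite_set.
    by move=> U [n [exn an] <-]; split => //; exists n.
have hns : forall a : set nat, exists x, X x /\
    (finite_set (m x `&` a) \/ finite_set (m x `\` a)).
  move=> a; apply: contrapT => h; apply: nos; exists a => x Xx.
  by split => hf; apply: h; exists x; split => //; [left|right].
have XsX i : Xs i `<=` X by rewrite XE => y Xy; exists i.
have /choice [z hz] := fun i => step3 hF einj eF einf hns Xx0 (XsX i) (hXs i).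
pose B := (fun i => m (z i)) @` [set: I].
have hch := hchain hF einj eF.
have UUE : UU X m = [set a | exists2 b, B b & finite_set (b `\` a)].
  apply/seteqP; split => a.
    move=> [x [Xx fx]]; rewrite XE in Xx; case: Xx => i _ Xix.
    exists (m (z i)); first by exists i.
    apply: sub_finite_set (finU ((hz i).2 x Xix) fx) => n [mzn na].
    by have [mx|mx] := pselect (m x n); [right|left].
  by move=> [b [i _ <-] fb]; exists (z i); split => //; exact: (hz i).1.
have ub : u_base B.
  split; first by move=> b [i _ <-]; apply: einf; exact: (hz i).1.
  exists (UU X m); split => //; split.
  - by move=> ? ?; apply: UU_I.
  - by move=> ? ?; apply: UU_up.
  - exact: UU_0.
  - exact: UU_ultra.
  - by move=> c fc uc; exact: (UU_fin einf uc fc).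
case: hI => [hlt|hc].
- exfalso; have [_ nle] := hlt B ub; exact: (nle (card_image_le _ _)).
- exfalso; apply: (no_countable_base ub); apply: card_le_trans (card_image_le _ _) hc.
Qed.
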